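(* Let $n,k\ge 1$ be integers, let $z_1,\dots,z_n$ be indeterminates, and let $\lambda=(\lambda_1,\dots,\lambda_k)$ be integers with $0\le\lambda_1\le\lambda_2\le\dots\le\lambda_k$. Then \[ \det(H(\lambda;n))=\sum_{b\in C(k,n)} S(z(b);\lambda)\,D(z(b))^2 . \]
   Context: $p_m=\sum_{i=1}^n z_i^m$ for $m\ge0$. $H(\lambda;n)$ is the $k\times k$ matrix with entries $H(\lambda;n)_{i,j}=p_{\lambda_i+j-1}$. For indeterminates $x_1,\dots,x_k$, $V(x_1,\dots,x_k;\lambda)$ is the $k\times k$ matrix with entries $x_j^{\lambda_i}$ (row $i$, column $j$), $D(x_1,\dots,x_k)=\prod_{1\le i<j\le k}(x_j-x_i)$ (with $D(x_1)=1$), and $S(x_1,\dots,x_k;\lambda)=\det V(x_1,\dots,x_k;\lambda)/D(x_1,\dots,x_k)$ (a polynomial). $C(k,n)$ is the set of $k$-element subsets $b=\{b_1<\dots<b_k\}$ of $\{1,\dots,n\}$, and $z(b)=(z_{b_1},\dots,z_{b_k})$. *)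

(* Defs.v *)
From HB Require Import structures.
From mathcomp Require Import all_boot all_order all_algebra.
From mathcomp.multinomials Require Import mpoly.
From Stdlib Require Import ClassicalEpsilon.
Set Implicit Arguments. Unset Strict Implicit. Unset Printing Implicit Defensive.
Import GRing.Theory.
Local Open Scope ring_scope.

Definition psum (R : comNzRingType) (n m : nat) : {mpoly R[n]} :=
  \sum_(i < n) 'X_i ^+ m.

(* H(lambda; n)_{i,j} = p_{lambda_i + j - 1} (1-based) = p_{lambda_i + j} (0-based j) *)
Definition Hmx (R : comNzRingType) (n k : nat) (lam : 'I_k -> nat) : 'M[{mpoly R[n]}]_k :=
  \matrix_(i < k, j < k) psum R n (lam i + j).

Definition Vmx (T : comNzRingType) (k : nat) (x : 'I_k -> T) (lam : 'I_k -> nat) : 'M[T]_k :=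
  \matrix_(i < k, j < k) x j ^+ lam i.

Definition Dprod (T : comNzRingType) (k : nat) (x : 'I_k -> T) : T :=
  \prod_(i < k) \prod_(j < k | (i < j)%N) (x j - x i).

(* S(x;lambda) = det V / D as a polynomial in k indeterminates: the q with
   q * D = det V (unique, D being a nonzero divisor) *)
Definition Spoly (R : comNzRingType) (k : nat) (lam : 'I_k -> nat) : {mpoly R[k]} :=
  epsilon (inhabits 0)
    (fun q : {mpoly R[k]} =>
       q * Dprod (fun j : 'I_k => 'X_j) = \det (Vmx (fun j : 'I_k => 'X_j) lam)).

(* z(b) = (z_{b_1},...,z_{b_k}) for b a subset of {1..n} listed increasingly *)
Definition zsub (R : comNzRingType) (n k : nat) (b : {set 'I_n}) : 'I_k -> {mpoly R[n]} :=
  fun j => nth 0 [seq 'X_i | i <- enum b] j.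

(* Main.v *)
Require Import Defs.
From HB Require Import structures.
From mathcomp Require Import all_boot all_order all_algebra.
From mathcomp Require Import all_fingroup.
From mathcomp.multinomials Require Import mpoly.
From Stdlib Require Import ClassicalEpsilon.
Set Implicit Arguments. Unset Strict Implicit.
Import GRing.Theory.
Local Open Scope ring_scope.
Section Newton.
Variable T : comNzRingType.
Variable xn : nat -> T.
Definition Np (l : nat) : {poly T} := \prod_(t < l) ('X - (xn t)%:P).

Lemma newton_ex L (p : {poly T}) : exists c : nat -> T, exists r : {poly T},
  p = \sum_(l < L) c l *: Np l + r * Np L.
Proof.
elim: L p => [|L IH] p.
  by exists (fun _ => 0), p; rewrite big_ord0 /Np big_ord0 mulr1 add0r.
have [c [r ->]] := IH p.
have : root (r - (r.[xn L])%:P) (xn L) by rewrite /root hornerD hornerN hornerC subrr.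
case/factor_theorem => q Hq.
exists (fun l => if l == L then r.[xn L] else c l), q.
rewrite big_ord_recr /= eqxx.
have -> : \sum_(l < L) (if (l:nat) == L then r.[xn L] else c l) *: Np l = \sum_(l<L) c l *: Np l.
  by apply: eq_bigr => l _; rewrite ltn_eqF.
set a := r.[xn L].
have Er : r = q * ('X - (xn L)%:P) + a%:P by rewrite -Hq subrK.
rewrite {1}Er /Np big_ord_recr /= -/(Np L) mulrDl -addrA; congr (_ + _).
by rewrite mul_polyC addrC -mulrA [_ * Np L]mulrC.
Qed.

Lemma Np_root l j : (j < l)%N -> (Np l).[xn j] = 0.
Proof.
move=> jl; rewrite /Np horner_prod (bigD1 (Ordinal jl)) //=.
by rewrite hornerD hornerN hornerX hornerC subrr mul0r.
Qed.
End Newton.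

Lemma S_exists (T : comNzRingType) k (x : 'I_k -> T) (lam : 'I_k -> nat) :
  exists q, q * Dprod x = \det (Vmx x lam).
Proof.
case: k x lam => [|k] x lam.
  by exists 1; rewrite /Dprod big_ord0 mulr1 det_mx00.
pose xn (t : nat) : T := x (inord t).
have xnE (j : 'I_k.+1) : xn j = x j by rewrite /xn inord_val.
have /fin_all_exists [C HC] : forall i : 'I_k.+1, exists c : nat -> T,
    exists r, 'X^(lam i) = \sum_(l < k.+1) c l *: Np xn l + r * Np xn k.+1.
  by move=> i; apply: newton_ex.
pose G : 'M[T]_k.+1 := \matrix_(i, l) C i l.
pose Nm : 'M[T]_k.+1 := \matrix_(l, j) (Np xn l).[x j].
have VE : Vmx x lam = G *m Nm.
  apply/matrixP => i j; rewrite !mxE.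
  have [r Hr] := HC i.
  have := congr1 (fun p => p.[x j]) Hr => /=.
  have Z := Np_root xn (ltn_ord j); rewrite xnE in Z.
  rewrite hornerXn hornerD hornerM Z mulr0 addr0 horner_sum => ->.
  by apply: eq_bigr => l _; rewrite hornerZ !mxE.
exists (\det G); rewrite VE det_mulmx; congr (_ * _); symmetry.
rewrite -det_tr det_trig; last first.
  by apply/is_trig_mxP => i j ij; rewrite !mxE -(xnE i) Np_root.
rewrite /Dprod.
transitivity (\prod_(j < k.+1) \prod_(i < k.+1 | (i < j)%N) (x j - x i)).
  apply: eq_bigr => j _; rewrite !mxE /Np horner_prod (big_ord_widen k.+1 (fun t => ('X - (xn t)%:P).[x j]) (ltnW (ltn_ord j))).
  rewrite big_mkcond [RHS]big_mkcond; apply: eq_bigr => i _.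
  case: ifP => // _; rewrite hornerD hornerN hornerX hornerC.
  by rewrite (xnE i).
by rewrite (exchange_big_dep xpredT).
Qed.

Section CB.
Variable T : comNzRingType.

Lemma det_rowsub_perm m n (B : 'M[T]_(n, m)) (g : 'I_m -> 'I_n) (s : 'S_m) :
  \det (rowsub (fun i => g (s i)) B) = (-1) ^+ s * \det (rowsub g B).
Proof.
have -> : rowsub (fun i => g (s i)) B = row_perm s (rowsub g B).
  by apply/matrixP => i j; rewrite !mxE.
by rewrite row_permE det_mulmx det_perm.
Qed.

Lemma CB_expand k n (A : 'M[T]_(k, n)) (B : 'M[T]_(n, k)) :
  \det (A *m B) = \sum_(f : {ffun 'I_k -> 'I_n}) (\prod_i A i (f i)) * \det (rowsub f B).
Proof.
transitivity (\sum_(s : 'S_k) \sum_(f : {ffun 'I_k -> 'I_n})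
   (-1) ^+ s * ((\prod_i A i (f i)) * \prod_i B (f i) (s i))).
  apply: eq_bigr => s _; rewrite -mulr_sumr; congr (_ * _).
  under eq_bigr do rewrite mxE.
  rewrite bigA_distr_bigA /=; apply: eq_bigr => f _; rewrite -big_split //.
rewrite exchange_big; apply: eq_bigr => f _.
rewrite [\det (rowsub f B)]/determinant mulr_sumr; apply: eq_bigr => s _.
rewrite mulrCA; congr (_ * (_ * _)); apply: eq_bigr => i _; rewrite mxE.
done.
Qed.

Lemma cauchy_binet k n (A : 'M[T]_(k, n)) (B : 'M[T]_(n, k))
    (g : {set 'I_n} -> 'I_k -> 'I_n) :
  (forall b : {set 'I_n}, #|b| = k -> injective (g b) /\ forall i, g b i \in b) ->
  \det (A *m B) = \sum_(b : {set 'I_n} | #|b| == k)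
                     \det (colsub (g b) A) * \det (rowsub (g b) B).
Proof.
move=> Hg.
have img (b : {set 'I_n}) : #|b| = k -> (g b) @: [set: 'I_k] = b.
  move=> bk; have [ginj gsub] := Hg b bk; apply/eqP.
  rewrite eqEcard card_imset // cardsT card_ord bk leqnn andbT.
  by apply/subsetP => y /imsetP [i _ ->].
pose h (p : {set 'I_n} * 'S_k) : {ffun 'I_k -> 'I_n} := [ffun i => g p.1 (p.2 i)].
have imgh (b : {set 'I_n}) (s : 'S_k) : #|b| = k -> (h (b, s)) @: [set: 'I_k] = b.
  move=> bk; rewrite -[RHS](img b bk); apply/setP => y.
  apply/imsetP/imsetP => [[i _ ->]|[j _ ->]].
    by exists (s i); rewrite ?ffunE ?inE.
  by exists ((s^-1)%g j); rewrite ?ffunE ?permKV ?inE.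
have Hex (f : {ffun 'I_k -> 'I_n}) : injective f -> exists p : {set 'I_n} * 'S_k, (#|p.1| == k) && (h p == f).
  move=> finj; set b := f @: [set: 'I_k].
  have bk : #|b| = k by rewrite card_imset // cardsT card_ord.
  have ex i : exists j, g b j == f i.
    have : f i \in b by apply: imset_f; rewrite inE.
    by rewrite -{1}(img b bk) => /imsetP [j _ ->]; exists j.
  have /fin_all_exists [t Ht] := ex.
  have tinj : injective t.
    by move=> i1 i2 E; apply: finj; rewrite -(eqP (Ht i1)) -(eqP (Ht i2)) E.
  exists (b, perm tinj); rewrite /= bk eqxx /=; apply/eqP/ffunP => i.
  by rewrite !ffunE permE; apply/eqP.
pose h' (f : {ffun 'I_k -> 'I_n}) := odflt (set0, 1%g) [pick p : {set 'I_n} * 'S_k | (#|p.1| == k) && (h p == f)].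
have hh' (f : {ffun 'I_k -> 'I_n}) : injectiveb f -> h (h' f) = f.
  move=> /injectiveP finj; rewrite /h'; case: pickP => [p /andP [_ /eqP //]|/= none].
  by have [p Hp] := Hex f finj; rewrite none in Hp.
rewrite CB_expand (bigID (fun f : {ffun 'I_k -> 'I_n} => injectiveb f)) /= [X in _ + X]big1 ?addr0; last first.
  move=> f /injectivePn [i1 [i2 ne E]].
  by rewrite (determinant_alternate ne) ?mulr0 // => j; rewrite !mxE E.
rewrite (reindex_onto h h' hh').
rewrite (eq_bigl (fun p : {set 'I_n} * 'S_k => #|p.1| == k)); last first.
  move=> [b s] /=.
  case: (boolP (#|b| == k)) => [/eqP bk | nbk].
    have [ginj gsub] := Hg b bk.
    have -> : injectiveb (h (b, s)).
      by apply/injectiveP => i1 i2; rewrite !ffunE => /ginj /perm_inj.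
    apply/eqP; rewrite /h'; case: pickP => [[b' s'] /andP [/eqP b'k /eqP E]| none]; last first.
      by move: (none (b, s)) => /=; rewrite bk !eqxx.
    have eb : b' = b by rewrite -(imgh b' s' b'k) E imgh.
    subst b'; congr (_, _); apply/permP => i; apply: ginj.
    by move/ffunP: E => /(_ i); rewrite !ffunE.
  apply/negbTE/negP => /andP [/injectiveP hi /eqP E'].
  have [p Hp] := Hex _ hi.
  move: E'; rewrite /h'; case: pickP => [p' /andP [/eqP p'k _] /= E'| none].
    by move: p'k; rewrite E' /= => p'k; rewrite p'k eqxx in nbk.
  by rewrite none in Hp.
transitivity (\sum_(b : {set 'I_n} | #|b| == k) \sum_(s : 'S_k)
   (\prod_i A i (h (b, s) i)) * \det (rowsub (h (b, s)) B)).
  by rewrite pair_big_dep; apply: eq_bigl => p; rewrite andbT.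
apply: eq_bigr => b _.
rewrite [\det (colsub _ _)]/determinant mulr_suml; apply: eq_bigr => s _.
have -> : rowsub (h (b, s)) B = rowsub (fun i => g b (s i)) B.
  by apply/matrixP => i j; rewrite !mxE ffunE.
rewrite det_rowsub_perm mulrCA mulrA; congr (_ * _ * _).
by apply: eq_bigr => i _; rewrite !mxE ffunE.
Qed.
End CB.

Lemma mmapX1 (n : nat) (R : comNzRingType) (S : comNzRingType) (f : {rmorphism R -> S}) (h : 'I_n -> S) i :
  mmap f h ('X_i : {mpoly R[n]}) = h i.
Proof. by rewrite mmapX mmap1U. Qed.

Unset Implicit Arguments.
Theorem theorem2p6 (R : idomainType) (n k : nat) (lam : 'I_k -> nat) :
  (0 < n)%N -> (0 < k)%N ->
  (forall i j : 'I_k, (i <= j)%N -> (lam i <= lam j)%N) ->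
  \det (@Hmx R n k lam) =
  \sum_(b : {set 'I_n} | #|b| == k)
     mmap (@mpolyC n R) (@zsub R n k b) (@Spoly R k lam) * Dprod (@zsub R n k b) ^+ 2.
Proof.
case: n => [//|n] _ _ _.
pose g (b : {set 'I_n.+1}) (i : 'I_k) : 'I_n.+1 := nth ord0 (enum b) i.
have Hg : forall b : {set 'I_n.+1}, #|b| = k -> injective (g b) /\ forall i, g b i \in b.
  move=> b bk; have sz : size (enum b) = k by rewrite -cardE.
  split.
    move=> i j /eqP; rewrite /g nth_uniq ?sz ?enum_uniq //.
    by move/eqP/val_inj.
  by move=> i; rewrite /g -mem_enum mem_nth ?sz.
pose A : 'M[{mpoly R[n.+1]}]_(k, n.+1) := \matrix_(i, l) 'X_l ^+ lam i.
pose B : 'M[{mpoly R[n.+1]}]_(n.+1, k) := \matrix_(l, j) 'X_l ^+ j.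
have -> : Hmx R n.+1 lam = A *m B.
  apply/matrixP => i j; rewrite !mxE /psum; apply: eq_bigr => l _.
  by rewrite !mxE exprD.
rewrite (cauchy_binet A B Hg); apply: eq_bigr => b /eqP bk.
have zE j : @zsub R n.+1 k b j = 'X_(g b j).
  rewrite /zsub (nth_map ord0) //; by rewrite -cardE bk.
have -> : colsub (g b) A = Vmx (@zsub R n.+1 k b) lam.
  by apply/matrixP => i j; rewrite !mxE zE.
have -> : rowsub (g b) B = (Vandermonde k (\row_j @zsub R n.+1 k b j))^T.
  by apply/matrixP => i j; rewrite !mxE zE.
rewrite det_tr det_Vandermonde.
have -> : \prod_(i < k) \prod_(j < k | (i < j)%N)
   ((\row_j0 @zsub R n.+1 k b j0) 0 j - (\row_j0 @zsub R n.+1 k b j0) 0 i)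
   = Dprod (@zsub R n.+1 k b).
  by rewrite /Dprod; apply: eq_bigr => i _; apply: eq_bigr => j _; rewrite !mxE.
rewrite expr2 mulrA; congr (_ * _).
have := epsilon_spec (inhabits 0)
    (fun q : {mpoly R[k]} => q * Dprod (fun j : 'I_k => 'X_j) = \det (Vmx (fun j : 'I_k => 'X_j) lam))
    (S_exists _ _).
rewrite -/(Spoly R lam) => /(congr1 (mmap (@mpolyC n.+1 R) (@zsub R n.+1 k b))).
have DX : mmap (@mpolyC n.+1 R) (@zsub R n.+1 k b) (Dprod (fun j : 'I_k => 'X_j))
    = Dprod (@zsub R n.+1 k b).
  rewrite /Dprod rmorph_prod; apply: eq_bigr => i _; rewrite rmorph_prod.
  by apply: eq_bigr => j _; rewrite rmorphB /= !mmapX1.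
rewrite rmorphM /= DX => ->.
rewrite -det_map_mx; congr (\det _).
apply/matrixP => i j; rewrite !mxE rmorphXn /=.
by rewrite mmapX1.
Qed.
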